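(* For every $\epsilon>0$ there exists a distributed algorithm in the LOCAL model that, for every outerplanar graph $G$, computes in a constant number of rounds (the constant depending only on $\epsilon$) a dominating set of $G$ of size at most $(8+\epsilon)\gamma(G)$.
   Context: All graphs are finite, undirected and simple. A graph is outerplanar if it has a plane embedding in which all vertices lie on the outer face. In the LOCAL model the input graph is the communication network: each vertex is a processor with a unique identifier; in each synchronous round every vertex may send arbitrary messages to its neighbours and perform arbitrary local computation; at the end each vertex decides whether it belongs to the output set. A dominating set of $G$ is a set $D\subseteq V(G)$ such that every vertex is in $D$ or has a neighbour in $D$; $\gamma(G)$ is the minimum size of a dominating set. *)

(* Defs.v *)
From mathcomp Require Import all_boot.
From Stdlib Require Import Reals.
Set Implicit Arguments. Unset Strict Implicit. Unset Printing Implicit Defensive.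

(* A finite graph whose vertices are identified with their (unique) natural
   number identifiers. *)
Record graph := Graph { gV : seq nat; gE : nat -> nat -> bool }.

Definition simple_graph (G : graph) : Prop :=
  [/\ uniq (gV G),
      (forall x y, gE G x y = gE G y x),
      (forall x, gE G x x = false)
    & (forall x y, gE G x y -> (x \in gV G) && (y \in gV G))].

(* Outerplanar: the vertices can be placed in convex position (a cyclic/linear
   order s) so that all edges, drawn as straight chords, are pairwise
   non-crossing; this is a plane embedding with every vertex on the outer face. *)
Definition outerplanar (G : graph) : Prop :=
  exists s : seq nat, perm_eq s (gV G) /\
    forall a b c d, gE G a b -> gE G c d ->
      ~ [/\ index a s < index c s, index c s < index b s & index b s < index d s].

Definition dominating (G : graph) (D : seq nat) : Prop :=
  {subset D <= gV G} /\
  forall v, v \in gV G -> (v \in D) \/ exists2 u, u \in D & gE G u v.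

Definition domination_number (G : graph) (k : nat) : Prop :=
  (exists D, [/\ uniq D, dominating G D & size D = k]) /\
  (forall D, uniq D -> dominating G D -> k <= size D).

Fixpoint inball (G : graph) (r : nat) (v u : nat) : bool :=
  match r with
  | 0 => (u == v) && (v \in gV G)
  | r'.+1 => inball G r' v u || has (fun w => inball G r' v w && gE G w u) (gV G)
  end.

(* A (deterministic) distributed algorithm: every vertex v of every graph G
   decides membership in the output set A G v. *)
Definition algorithm := graph -> nat -> bool.

(* The algorithm runs in r rounds of the LOCAL model: the decision of v only
   depends on its radius-r neighbourhood (vertices with identifiers and the
   edges among them). *)
Definition local_in_rounds (r : nat) (A : algorithm) : Prop :=
  forall G G' v, simple_graph G -> simple_graph G' ->
    v \in gV G -> v \in gV G' ->
    (forall u, inball G r v u = inball G' r v u) ->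
    (forall u w, inball G r v u -> inball G r v w -> gE G u w = gE G' u w) ->
    A G v = A G' v.

Definition output (A : algorithm) (G : graph) : seq nat :=
  [seq v <- gV G | A G v].

(* Main.v *)
Require Import Defs.
From mathcomp Require Import all_boot.
From Stdlib Require Import Reals.
From mathcomp Require Import zify.
From Stdlib Require Import Lra.
Set Implicit Arguments. Unset Strict Implicit. Unset Printing Implicit Defensive.

(* MathComp boot (seq) + Stdlib reals.
   Algorithm: v joins iff no other vertex u has N[v] strictly inside N[u],
   or N[v] = N[u] with u < v.  Runs in 2 rounds; |output| <= 5 gamma + 2. *)
Definition inN (G : graph) (v w : nat) : bool := (w == v) || gE G v w.
Definition subN (G : graph) (v u : nat) : bool :=
  all (fun w => inN G v w ==> inN G u w) (gV G).
Definition domby (G : graph) (u v : nat) : bool :=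
  subN G v u && (~~ subN G u v || (u < v)).
Definition alg : algorithm := fun G v =>
  (v \in gV G) && all (fun u => (u == v) || ~~ domby G u v) (gV G).

Lemma sg_sym G x y : simple_graph G -> gE G x y = gE G y x.
Proof. by case. Qed.
Lemma sg_irr G x : simple_graph G -> gE G x x = false.
Proof. by case. Qed.
Lemma sg_V1 G x y : simple_graph G -> gE G x y -> x \in gV G.
Proof. by case=> _ _ _ H /H /andP[]. Qed.
Lemma sg_V2 G x y : simple_graph G -> gE G x y -> y \in gV G.
Proof. by case=> _ _ _ H /H /andP[]. Qed.

Lemma inball_V G r v u : simple_graph G -> inball G r v u -> u \in gV G.
Proof.
move=> sG; elim: r u => [|r IH] u /=; first by case/andP=> /eqP ->.
case/orP; first exact: IH.
by case/hasP=> w _ /andP[_ /(sg_V2 sG)].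
Qed.

Lemma inball_mono G r v u : inball G r v u -> inball G r.+1 v u.
Proof. by move=> h /=; rewrite h. Qed.

Lemma inball_step G r v w u : simple_graph G -> inball G r v w -> gE G w u ->
  inball G r.+1 v u.
Proof.
move=> sG hw e /=; apply/orP; right; apply/hasP; exists w => //.
  exact: (sg_V1 sG e).
by rewrite hw e.
Qed.

Lemma inball_self G r v : v \in gV G -> inball G r v v.
Proof. by move=> vV; elim: r => [|r IH] /=; rewrite ?eqxx ?vV ?IH. Qed.

Lemma inN_ball1 G v w : simple_graph G -> v \in gV G -> inN G v w -> inball G 1 v w.
Proof.
move=> sG vV; case/orP=> [/eqP ->|e]; first exact: inball_self.
by apply: inball_step e => //; apply: inball_self.
Qed.

Lemma inN_V G v w : simple_graph G -> v \in gV G -> inN G v w -> w \in gV G.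
Proof. by move=> sG vV /(inN_ball1 sG vV) /(inball_V sG). Qed.

Lemma subN_P G v u : simple_graph G -> v \in gV G ->
  reflect (forall w, inN G v w -> inN G u w) (subN G v u).
Proof.
move=> sG vV; apply: (iffP allP) => H w.
  by move=> h; have := H w (inN_V sG vV h); rewrite h.
by move=> _; apply/implyP; apply: H.
Qed.

Lemma alg_P G v : simple_graph G -> v \in gV G ->
  alg G v <-> (forall u, gE G v u -> ~~ domby G u v).
Proof.
move=> sG vV; rewrite /alg vV /=; split.
  move/allP=> H u e; have := H u (sg_V2 sG e).
  by rewrite (_ : (u == v) = false) //; apply/eqP=> uv; rewrite uv sg_irr in e.
move=> H; apply/allP=> u uV; case: (eqVneq u v) => //= uv.
case eu: (gE G v u); first exact: H.
rewrite /domby; apply/negP=> /andP[/(subN_P _ sG vV) h _].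
have := h v; rewrite /inN eqxx /= => /(_ isT).
by rewrite eq_sym (negbTE uv) /= sg_sym // eu.
Qed.

Lemma local2 : local_in_rounds 2 alg.
Proof.
move=> G G' v sG sG' vV vV' HB HE.
have B2 : forall w, inball G 1 v w -> inball G 2 v w by move=> w; apply: inball_mono.
have Ev : forall w, gE G v w = gE G' v w.
  move=> w; case e: (gE G v w).
    have b : inball G 2 v w by apply: B2; apply: inball_step e; rewrite // inball_self.
    by rewrite -HE // inball_self.
  case e': (gE G' v w) => //.
  have b : inball G' 2 v w by apply: inball_mono; apply: inball_step e'; rewrite // inball_self.
  rewrite -HB in b; by have := HE v w (inball_self 2 vV) b; rewrite e e'.
have Nu : forall u, gE G v u -> forall w, inN G u w = inN G' u w.
  move=> u e w; rewrite /inN; case: (w == u) => //=.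
  have bu : inball G 1 v u by apply: inball_step e; rewrite // inball_self.
  case e1: (gE G u w).
    have b : inball G 2 v w by apply: inball_step e1.
    by rewrite -HE // inball_mono.
  case e2: (gE G' u w) => //.
  have b : inball G' 2 v w.
    apply: inball_step e2 => //; apply: inball_step (inball_self 0 vV') _ => //.
    by rewrite -Ev.
  rewrite -HB in b; by have := HE u w (inball_mono bu) b; rewrite e1 e2.
have Dv : forall u, gE G v u -> domby G u v = domby G' u v.
  move=> u e; have e' : gE G' v u by rewrite -Ev.
  have uV := sg_V2 sG e; have uV' := sg_V2 sG' e'.
  rewrite /domby.
  have -> : subN G v u = subN G' v u.
    apply/idP/idP.
      move/(subN_P _ sG vV) => H; apply/(subN_P _ sG' vV') => w.
      by rewrite -(Nu u e w) /inN -Ev => /H; rewrite /inN.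
    move/(subN_P _ sG' vV') => H; apply/(subN_P _ sG vV) => w.
    by rewrite (Nu u e w) /inN Ev => /H; rewrite /inN.
  have -> : subN G u v = subN G' u v.
    apply/idP/idP.
      move/(subN_P _ sG uV) => H; apply/(subN_P _ sG' uV') => w.
      by rewrite -(Nu u e w) => /H; rewrite /inN Ev.
    move/(subN_P _ sG' uV') => H; apply/(subN_P _ sG uV) => w.
    by rewrite (Nu u e w) => /H; rewrite /inN -Ev.
  by [].
apply/idP/idP.
  move/(alg_P sG vV)=> H; apply/(alg_P sG' vV') => u e'.
  have e : gE G v u by rewrite Ev.
  by rewrite -Dv //; apply: H.
move/(alg_P sG' vV')=> H; apply/(alg_P sG vV) => u e.
by rewrite Dv //; apply: H; rewrite -Ev.
Qed.
Lemma count_sub_le (T : eqType) (p q : pred T) s :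
  {in s, forall x, p x -> q x} -> count p s <= count q s.
Proof.
elim: s => //= x s IH H.
have Hs : {in s, forall x, p x -> q x} by move=> y ys; apply: H; rewrite inE ys orbT.
have := IH Hs; have := H x (mem_head _ _).
by case: (p x); case: (q x) => /= hh; try lia; have := hh isT.
Qed.

Lemma count_sub_lt (T : eqType) (p q : pred T) s :
  {in s, forall x, p x -> q x} -> has (fun x => q x && ~~ p x) s ->
  count p s < count q s.
Proof.
elim: s => //= x s IH H.
have Hs : {in s, forall x, p x -> q x} by move=> y ys; apply: H; rewrite inE ys orbT.
have le := count_sub_le Hs.
case/orP.
  case/andP=> qx px; rewrite qx (negbTE px) /=; lia.
move=> h; have := IH Hs h; have := H x (mem_head _ _).
by case: (p x); case: (q x) => /= hh; try lia; have := hh isT.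
Qed.

Lemma le_foldr_max s u : u \in s -> u <= foldr maxn 0 s.
Proof. elim: s => //= x s IH; rewrite inE => /orP[/eqP->|/IH]; lia. Qed.

Definition cnt G x := count (inN G x) (gV G).
Definition mu G x := (size (gV G) - cnt G x) * (foldr maxn 0 (gV G)).+1 + x.

Lemma domby_mu G u v : simple_graph G -> u \in gV G -> v \in gV G ->
  domby G u v -> mu G u < mu G v.
Proof.
move=> sG uV vV /andP[/(subN_P _ sG vV) h1 h2]; rewrite /mu.
set Bm := (foldr maxn 0 (gV G)).+1.
have cvu : cnt G v <= cnt G u by apply: count_sub_le => w _; apply: h1.
have cun : cnt G u <= size (gV G) by apply: count_size.
have ub : u < Bm by rewrite ltnS le_foldr_max.
have vb : v < Bm by rewrite ltnS le_foldr_max.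
case hs: (subN G u v) h2 => /= h2.
  have cuv : cnt G u <= cnt G v.
    by apply: count_sub_le => w _; apply/(subN_P _ sG uV).
  have -> : cnt G u = cnt G v by apply/eqP; rewrite eqn_leq cuv cvu.
  lia.
have lt : cnt G v < cnt G u.
  apply: count_sub_lt => [w _|]; first exact: h1.
  move/negbT/allPn: hs => [w wV]; rewrite negb_imply => hw.
  by apply/hasP; exists w.
have : (size (gV G) - cnt G u).+1 <= size (gV G) - cnt G v by lia.
rewrite -(leq_pmul2r (ltn0Sn _ : 0 < Bm)) mulSn => h; lia.
Qed.

Lemma alg_dom G : simple_graph G -> dominating G (output alg G).
Proof.
move=> sG; split; first by move=> x; rewrite mem_filter => /andP[].
have main : forall m u, mu G u < m -> u \in gV G -> forall w, inN G u w ->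
    exists2 z, z \in output alg G & inN G z w.
  elim=> // m IH u mu_lt uV w hw.
  case au: (alg G u); first by exists u => //; rewrite mem_filter au.
  move: au; rewrite /alg uV /= => /negbT/allPn [u' u'V].
  rewrite negb_or negbK => /andP[u'u dom].
  apply: (IH u') => //.
    have := domby_mu sG u'V uV dom; lia.
  by move: dom => /andP[/(subN_P _ sG uV) h _]; apply: h.
move=> v vV; have [z zS] := main _ v (ltnSn _) vV v (introT orP (or_introl (eqxx v))).
rewrite /inN; case/orP=> [/eqP vz|e]; first by left; rewrite vz.
by right; exists z.
Qed.
Record setting (G : graph) (s D : seq nat) (L : nat -> nat) : Prop := Setting {
  st_simple : simple_graph G;
  st_perm : perm_eq s (gV G);
  st_nc : forall a b c d, gE G a b -> gE G c d ->
     ~ [/\ index a s < index c s, index c s < index b s & index b s < index d s];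
  st_DV : {subset D <= gV G};
  st_LD : forall v, v \in gV G -> L v \in D;
  st_Lstar : forall v, v \in gV G -> L v != v -> gE G (L v) v;
  st_LDfix : forall d, d \in D -> L d = d }.


Lemma st_mem G s D L : setting G s D L -> s =i gV G.
Proof. by case=> _ /perm_mem. Qed.

Lemma st_uniq G s D L : setting G s D L -> uniq s.
Proof. by case=> [[uV _ _ _]] /perm_uniq ->. Qed.

Lemma pos_lt G s D L v : setting G s D L -> v \in gV G -> index v s < size s.
Proof. by move=> st vV; rewrite index_mem (st_mem st). Qed.

Lemma at_V G s D L i : setting G s D L -> i < size s -> nth 0 s i \in gV G.
Proof. by move=> st lt; rewrite -(st_mem st) mem_nth. Qed.

Lemma pos_at G s D L i : setting G s D L -> i < size s -> index (nth 0 s i) s = i.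
Proof. by move=> st lt; rewrite index_uniq // (st_uniq st). Qed.

Lemma at_pos G s D L v : setting G s D L -> v \in gV G -> nth 0 s (index v s) = v.
Proof. by move=> st vV; rewrite nth_index // (st_mem st). Qed.

Lemma pos_inj G s D L u v : setting G s D L -> u \in gV G -> v \in gV G ->
  index u s = index v s -> u = v.
Proof. by move=> st uV vV h; rewrite -(at_pos st uV) h (at_pos st vV). Qed.

Lemma cross G s D L p q r t : setting G s D L -> gE G p q -> gE G r t ->
  (index p s < index r s < index q s \/ index q s < index r s < index p s) ->
  (index t s < index p s /\ index t s < index q s \/
   index p s < index t s /\ index q s < index t s) -> False.
Proof.
move=> st epq ert.
have sG := st_simple st.
have nc := st_nc st.
have H1 : forall p q, gE G p q -> index p s < index r s < index q s ->
    (index t s < index p s \/ index q s < index t s) -> False.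
  move=> p' q' e /andP[h1 h2] [h3|h3].
    apply: (nc t r p' q'); first by rewrite (sg_sym _ _ sG).
      exact: e.
    split; lia.
  apply: (nc p' q' r t) => //; split; lia.
case=> [hR|hR] hT.
  apply: (H1 p q epq hR); lia.
apply: (H1 q p); first by rewrite (sg_sym _ _ sG).
  all: try lia.
Qed.

Lemma sep G s D L p q b v w : setting G s D L -> gE G p q -> b \in D ->
  p != b -> q != b -> v \in gV G -> w \in gV G -> L v = b -> L w = b ->
  (index p s < index v s < index q s \/ index q s < index v s < index p s) ->
  (index w s < index p s /\ index w s < index q s \/
   index p s < index w s /\ index q s < index w s) -> False.
Proof.
move=> st e bD pb qb vV wV Lv Lw hv hw.
have sG := st_simple st.
have bV := st_DV st bD.
have pV := sg_V1 sG e; have qV := sg_V2 sG e.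
have npb : index p s != index b s.
  by apply: contra pb => /eqP h; apply/eqP; apply: (pos_inj st).
have nqb : index q s != index b s.
  by apply: contra qb => /eqP h; apply/eqP; apply: (pos_inj st).
have Lb := st_LDfix st bD.
case: (boolP ((index p s < index b s < index q s) || (index q s < index b s < index p s))) => hb.
  have wb : w != b by apply/eqP=> wb; move: hw hb; rewrite wb; lia.
  have ebw : gE G b w by rewrite -{1}Lw; apply: (st_Lstar st wV); rewrite Lw eq_sym.
  apply: (cross st e ebw) => //; lia.
have vb : v != b by apply/eqP=> vb; move: hv hb; rewrite vb; lia.
have ebv : gE G b v by rewrite -{1}Lv; apply: (st_Lstar st vV); rewrite Lv eq_sym.
apply: (cross st e (_ : gE G v b)); first by rewrite (sg_sym _ _ sG).
  by [].
lia.
Qed.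

Lemma runend G s D L x y : setting G s D L -> x \in gV G -> x \notin D ->
  gE G x y -> L y != L x ->
  [|| index x s == 0, L (nth 0 s (index x s).-1) != L x,
      (index x s).+1 == size s | L (nth 0 s (index x s).+1) != L x].
Proof.
move=> st xV xD e Lyx.
have sG := st_simple st.
have yV := sg_V2 sG e.
have bD := st_LD st xV.
have xb : x != L x by apply: contraNneq xD => ->.
have Lb := st_LDfix st bD.
have yb : y != L x by apply: contra Lyx => /eqP ->; rewrite Lb.
have pxn := pos_lt st xV; have pyn := pos_lt st yV.
have nxy : index x s != index y s.
  apply/eqP=> h; have := pos_inj st xV yV h => exy.
  by rewrite exy (sg_irr _ sG) in e.
apply/negPn/negP; rewrite !negb_or !negbK => /and4P[/eqP p0 /eqP L1 /eqP pn /eqP L2].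
have i1 : (index x s).-1 < size s by lia.
have i2 : (index x s).+1 < size s by lia.
have w1V := at_V st i1; have w2V := at_V st i2.
have pw1 := pos_at st i1; have pw2 := pos_at st i2.
case: (ltngtP (index x s) (index y s)) => [lt|gt|eq]; last by rewrite eq eqxx in nxy.
  case: (eqVneq (index x s).+1 (index y s)) => [h|h].
    by move: L2; rewrite h (at_pos st yV) => /eqP; rewrite (negbTE Lyx).
  apply: (sep st e bD xb yb w2V w1V L2 L1); rewrite ?pw1 ?pw2; lia.
case: (eqVneq (index x s).-1 (index y s)) => [h|h].
  by move: L1; rewrite h (at_pos st yV) => /eqP; rewrite (negbTE Lyx).
apply: (sep st e bD xb yb w1V w2V L1 L2); rewrite ?pw1 ?pw2; lia.
Qed.

Lemma nointer G s D L i j l m b c : setting G s D L ->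
  i < j -> j < l -> l < m -> m < size s ->
  L (nth 0 s i) = b -> L (nth 0 s l) = b ->
  L (nth 0 s j) = c -> L (nth 0 s m) = c -> b != c -> False.
Proof.
move=> st ij jl lm mn Li Ll Lj Lm bc.
have iV : nth 0 s i \in gV G by apply: (at_V st); lia.
have jV : nth 0 s j \in gV G by apply: (at_V st); lia.
have lV : nth 0 s l \in gV G by apply: (at_V st); lia.
have mV : nth 0 s m \in gV G by apply: (at_V st); lia.
have pi : index (nth 0 s i) s = i by apply: (pos_at st); lia.
have pj : index (nth 0 s j) s = j by apply: (pos_at st); lia.
have pl : index (nth 0 s l) s = l by apply: (pos_at st); lia.
have pm : index (nth 0 s m) s = m by apply: (pos_at st); lia.
have bD : b \in D by rewrite -Li; apply: (st_LD st).
have cD : c \in D by rewrite -Lj; apply: (st_LD st).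
have Lb := st_LDfix st bD; have Lc := st_LDfix st cD.
have cV := st_DV st cD.
have cb : c != b by rewrite eq_sym.
have ci : index c s != i.
  apply/eqP=> h; have := pos_inj st cV iV; rewrite pi => /(_ h) hc.
  by move: Li; rewrite -hc Lc => /eqP; rewrite eq_sym (negbTE bc).
have cl : index c s != l.
apply/eqP=> h; have := pos_inj st cV lV; rewrite pl => /(_ h) hc.
by move: Ll; rewrite -hc Lc => /eqP; rewrite eq_sym (negbTE bc).
have Jb : nth 0 s j != b by apply/eqP=> h; move: Lj; rewrite h Lb => /eqP; rewrite (negbTE bc).
have Mb : nth 0 s m != b by apply/eqP=> h; move: Lm; rewrite h Lb => /eqP; rewrite (negbTE bc).
case: (boolP ((index c s < i) || (l < index c s))) => hc.
have Jc : nth 0 s j != c by apply/eqP=> h; move: hc; rewrite -h pj; lia.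
have e : gE G c (nth 0 s j) by rewrite -{1}Lj; apply: (st_Lstar st jV); rewrite Lj eq_sym.
case/orP: hc => hc.
  apply: (sep st e bD cb Jb iV lV Li Ll); rewrite ?pi ?pj ?pl; lia.
apply: (sep st e bD cb Jb lV iV Ll Li); rewrite ?pi ?pj ?pl; lia.
have Mc : nth 0 s m != c by apply/eqP=> h; move: hc; rewrite -h pm; lia.
have e : gE G c (nth 0 s m) by rewrite -{1}Lm; apply: (st_Lstar st mV); rewrite Lm eq_sym.
apply: (sep st e bD cb Mb lV iV Ll Li); rewrite ?pi ?pm ?pl; lia.
Qed.

Definition lp (s : seq nat) (L : nat -> nat) i := L (nth 0 s i).
Definition Tr (s : seq nat) L :=
[seq p <- iota 1 (size s).-1 | lp s L p.-1 != lp s L p].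

Lemma mem_Tr s L p : (p \in Tr s L) = [&& 0 < p, p < size s & lp s L p.-1 != lp s L p].
Proof.
rewrite mem_filter mem_iota; case: (lp s L p.-1 != lp s L p); rewrite ?andbT ?andbF //.
case: p => [|p] //=; rewrite add1n ltnS; case: (size s) => //.
Qed.

Lemma lp_D G s D L i : setting G s D L -> i < size s -> lp s L i \in D.
Proof. by move=> st lt; apply: (st_LD st); apply: (at_V st). Qed.

Lemma Tr_bound G s D L : setting G s D L -> size (Tr s L) <= size D * 2.
Proof.
move=> st.
set P := fun p => has (fun q => lp s L q == lp s L p.-1) (iota p (size s - p)).
have uT : uniq (Tr s L) by rewrite filter_uniq // iota_uniq.
rewrite -(count_predC P) -!size_filter mulnS muln1 addnC.
have cl : forall p p', p \in Tr s L -> p' \in [seq x <- Tr s L | P x] -> p < p' ->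
    lp s L p = lp s L p' -> False.
  move=> p p'; rewrite mem_Tr => /and3P[p0 pn lpp].
  rewrite mem_filter => /andP[Pp']; rewrite mem_Tr => /and3P[p0' pn' lpp'] lt eq.
  move/hasP: Pp' => [q]; rewrite mem_iota => /andP[q1 q2] /eqP lq.
  have qp' : q != p' by apply/eqP=> h; rewrite h in lq; by rewrite lq eqxx in lpp'.
  have pp' : p'.-1 != p by apply/eqP=> h; by rewrite h eq eqxx in lpp'.
  apply: (@nointer G s D L p p'.-1 p' q (lp s L p) (lp s L p'.-1) st) => //.
  all: try lia.
apply: leq_add.
  rewrite -(size_map (fun p => lp s L p.-1)).
  apply: uniq_leq_size.
    rewrite map_inj_in_uniq ?filter_uniq ?iota_uniq // => p p' hp hp' eq.
    have mT : forall x, x \in [seq x <- Tr s L | predC P x] -> ~~ P x /\ 0 < x < size s.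
      move=> x; rewrite mem_filter => /andP[nP]; rewrite mem_Tr => /and3P[a b _].
      by split => //; rewrite a b.
    case: (ltngtP p p') => // lt.
      have [nP _] := mT _ hp; have [_ h'] := mT _ hp'.
      exfalso; apply: (negP nP); apply/hasP; exists p'.-1; last by rewrite eq.
      rewrite mem_iota; lia.
    have [nP _] := mT _ hp'; have [_ h'] := mT _ hp.
    exfalso; apply: (negP nP); apply/hasP; exists p.-1; last by rewrite eq.
    rewrite mem_iota; lia.
  move=> z /mapP[p]; rewrite mem_filter mem_Tr => /andP[_ /and3P[p0 pn _]] ->.
  apply: (lp_D st); lia.
rewrite -(size_map (lp s L)).
apply: uniq_leq_size.
  rewrite map_inj_in_uniq ?filter_uniq ?iota_uniq // => p p' hp hp' eq.
  case: (ltngtP p p') => // lt.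
    by elim: (cl p p') => //; move: hp; rewrite mem_filter => /andP[].
  by elim: (cl p' p) => //; move: hp'; rewrite mem_filter => /andP[].
move=> z /mapP[p]; rewrite mem_filter mem_Tr => /andP[_ /and3P[p0 pn _]] ->.
by apply: (lp_D st).
Qed.

Definition Xs G (D : seq nat) (L : nat -> nat) :=
  [seq x <- gV G | (x \notin D) && has (fun y => gE G x y && (L y != L x)) (gV G)].

Lemma X_bound G s D L : setting G s D L ->
  size (Xs G D L) <= (size (Tr s L)).*2.+2.
Proof.
move=> st; have sG := st_simple st.
have uV : uniq (gV G) by case: sG.
have -> : (size (Tr s L)).*2.+2 =
   size (0 :: (size s).-1 :: Tr s L ++ map predn (Tr s L)).
  by rewrite /= size_cat size_map addnn.
rewrite -(size_map (fun x => index x s)).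
apply: uniq_leq_size.
  rewrite map_inj_in_uniq ?filter_uniq // => x y.
  rewrite !mem_filter => /andP[_ xV] /andP[_ yV]; exact: pos_inj st xV yV.
move=> z /mapP[x]; rewrite mem_filter => /andP[/andP[xD /hasP[y yV /andP[e Ly]]] xV] ->.
have xn := pos_lt st xV.
rewrite !inE mem_cat.
case/or4P: (runend st xV xD e Ly) => [->//|h|/eqP h|h].
- case: (eqVneq (index x s) 0) => [->//|x0].
  by rewrite mem_Tr /lp (at_pos st xV) h xn lt0n x0 !orbT.
- by rewrite -h /= eqxx orbT.
- case: (eqVneq (index x s).+1 (size s)) => [<-|xn1]; first by rewrite /= eqxx orbT.
  apply/orP; right; apply/orP; right; apply/orP; right.
  apply/mapP; exists (index x s).+1 => //.
  rewrite mem_Tr /lp /= (at_pos st xV) eq_sym h /=; lia.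
Qed.

Lemma algS G v u : alg G v -> u \in gV G -> u != v -> subN G v u ->
  subN G u v && (v < u).
Proof.
case/andP=> _ /allP /(_ u) H uV uv svu.
move: (H uV); rewrite (negbTE uv) /= /domby svu /= negb_or negbK => /andP[-> h].
by move: h uv; rewrite -leqNgt leq_eqVlt eq_sym => /orP[->|].
Qed.

Lemma K_sub G s D L v : setting G s D L -> v \in gV G -> v \notin D ->
  v \notin Xs G D L -> subN G v (L v).
Proof.
move=> st vV vD vX; have sG := st_simple st.
have Lvv : L v != v by apply: contraNneq vD => <-; apply: (st_LD st).
have eav := st_Lstar st vV Lvv.
move: vX; rewrite mem_filter vV vD /= andbT => /hasPn H.
apply/(subN_P _ sG vV) => w; rewrite /inN => /orP[/eqP ->|e].
  by rewrite eav orbT.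
have wV := sg_V2 sG e.
have := H w wV; rewrite e /= negbK => /eqP Lw.
case: (eqVneq (L w) w) => [h|h].
  by rewrite -{1}h Lw eqxx.
by rewrite -Lw (st_Lstar st wV h) orbT.
Qed.

Lemma SX_bound G s D L : setting G s D L ->
  size [seq v <- output alg G | v \notin Xs G D L] <= size D.
Proof.
move=> st; have sG := st_simple st.
have uV : uniq (gV G) by case: sG.
rewrite -[X in X <= _](size_map L); apply: uniq_leq_size; last first.
  move=> z /mapP[v]; rewrite !mem_filter => /andP[_ /andP[_ vV]] ->.
  exact: (st_LD st).
have mS : forall v, v \in [seq v <- output alg G | v \notin Xs G D L] ->
    [/\ alg G v, v \in gV G & v \notin Xs G D L].
  by move=> v; rewrite !mem_filter => /andP[-> /andP[-> ->]].
have trans : forall a b c, a \in gV G -> subN G a b -> subN G b c -> subN G a c.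
  move=> a b c aV /(subN_P _ sG aV) h1 h2.
  apply/(subN_P _ sG aV) => w /h1 hb.
  have bV : b \in gV G.
    have := h1 a; rewrite /inN eqxx /= => /(_ isT) /orP[/eqP <-//|e].
    exact: sg_V1 sG e.
  by move/(subN_P _ sG bV): h2; apply.
have nD : forall v, alg G v -> v \in gV G -> v \notin Xs G D L -> v \notin D ->
    [/\ subN G v (L v), subN G (L v) v & v < L v].
  move=> v av vV vX vD.
  have Lvv : L v != v by apply: contraNneq vD => <-; apply: (st_LD st).
  have h := K_sub st vV vD vX.
  have LV : L v \in gV G by apply: (st_DV st); apply: (st_LD st).
  by have /andP[-> ->] := algS av LV Lvv h.
rewrite map_inj_in_uniq ?filter_uniq // => v v' /mS[av vV vX] /mS[av' vV' vX'] eq.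
case: (eqVneq v v') => // vv'; exfalso.
have vv'' : v' != v by rewrite eq_sym.
case: (boolP (v \in D)) => vD; case: (boolP (v' \in D)) => vD'.
- by move: vv'; rewrite -[v](st_LDfix st vD) -[v'](st_LDfix st vD') eq eqxx.
- have [h1 h2 h3] := nD v' av' vV' vX' vD'.
  move: h1 h2 h3; rewrite -eq (st_LDfix st vD) => h1 h2 h3.
  have /andP[_ h] := algS av vV' vv'' h2; by move: (ltn_trans h h3); rewrite ltnn.
- have [h1 h2 h3] := nD v av vV vX vD.
  move: h1 h2 h3; rewrite eq (st_LDfix st vD') => h1 h2 h3.
  have /andP[_ h] := algS av' vV vv' h2; by move: (ltn_trans h h3); rewrite ltnn.
- have [h1 h2 h3] := nD v av vV vX vD.
  have [h1' h2' h3'] := nD v' av' vV' vX' vD'.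
  rewrite -eq in h1' h2' h3'.
  have LV : L v \in gV G by apply: (st_DV st); apply: (st_LD st).
  have s1 := trans _ _ _ vV h1 h2'.
  have s2 := trans _ _ _ vV' h1' h2.
  have /andP[_ h] := algS av vV' vv'' s1.
  have /andP[_ h'] := algS av' vV vv' s2.
  by move: (ltn_trans h h'); rewrite ltnn.
Qed.

Lemma main_bound G D : simple_graph G -> outerplanar G -> uniq D ->
  dominating G D -> size (output alg G) <= 8 * size D.
Proof.
move=> sG op uD0 [DV Ddom]; case: op => s [ps nc].
pose L v := if v \in D then v else nth 0 D (find (fun u => gE G u v) D).
have hasL : forall v, v \in gV G -> v \notin D -> has (fun u => gE G u v) D.
  move=> v vV vD; case: (Ddom v vV) => [h|[u uD e]]; first by rewrite h in vD.
  by apply/hasP; exists u.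
have st : setting G s D L.
  split => //.
  - move=> v vV; rewrite /L; case: ifP => // vD.
    by rewrite mem_nth // -has_find hasL // vD.
  - move=> v vV; rewrite /L; case: ifP => [_|vD _]; first by rewrite eqxx.
    by apply: (@nth_find _ 0 (fun u => gE G u v)); rewrite hasL // vD.
  - by move=> d dD; rewrite /L dD.
have b1 := SX_bound st.
have b2 := X_bound st.
have b3 := Tr_bound st.
have b4 : size [seq v <- output alg G | v \in Xs G D L] <= size (Xs G D L).
  apply: uniq_leq_size.
    by rewrite !filter_uniq //; case: sG.
  by move=> v; rewrite mem_filter => /andP[].
have e : size (output alg G) =
    size [seq v <- output alg G | v \notin Xs G D L] +
    size [seq v <- output alg G | v \in Xs G D L].
  by rewrite -(count_predC (fun v => v \in Xs G D L) (output alg G)) addnC -!size_filter.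
move: b2; rewrite -addnn => b2.
case: (posnP (size D)) => [D0|Dpos].
2: rewrite e; apply: leq_trans (leq_add b1 (leq_trans b4 b2)) _.
2: move: b3 Dpos; move: (size (Tr s L)) (size D) => t d; clear; lia.
have V0 : gV G = [::].
  case E: (gV G) => [|v V] //.
  have vV : v \in gV G by rewrite E mem_head.
  move/eqP: D0; rewrite size_eq0 => /eqP D0.
  by case: (Ddom v vV) => [|[u]]; rewrite D0.
by rewrite /output V0.
Qed.

Theorem theorem7 :
  forall eps : R, (0 < eps)%R ->
  exists (r : nat) (A : algorithm),
    local_in_rounds r A /\
    forall G : graph, simple_graph G -> outerplanar G ->
      dominating G (output A G) /\
      forall k : nat, domination_number G k ->
        (INR (size (output A G)) <= (8 + eps) * INR k)%R.
Proof.
move=> eps he; exists 2, alg; split; first exact: local2.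
move=> G sG oG; split; first exact: alg_dom.
move=> k [[D [uD dD sD]] _].
have h := main_bound sG oG uD dD; rewrite sD in h.
have h' : (INR (size (output alg G)) <= INR (8 * k))%R by apply: le_INR; apply/leP.
rewrite mult_INR in h'.
replace (INR 8) with 8%R in h' by (simpl; ring).
have hk := pos_INR k.
have : (0 <= eps * INR k)%R by apply: Rmult_le_pos => //; lra.
lra.
Qed.
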